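(* Let $n\le -1$ be an odd integer with $3\mid n$ and $n\equiv 1\pmod 4$. Then $q_n$ has no monic quadratic factor $f\in\mathbb{Z}[w]$ with $f\equiv w^2\pmod 3$.
   Context: Define $q_n\in\mathbb{Z}[w]$ for odd $n\le -1$ by $q_{-1}=w^3-w^2+2w-7$, $q_{-3}=w^5-2w^4-2w^3+5w^2+3w-9$, $q_{-5}=w^7-2w^6-4w^5+8w^4+4w^3-7w^2+2w-7$, and $q_n=(w^2-1)(q_{n+2}-q_{n+4})+q_{n+6}$ for odd $n<-5$. *)

(* Defs.v *)
From HB Require Import structures.
From mathcomp Require Import all_boot all_order all_algebra.
Set Implicit Arguments. Unset Strict Implicit. Unset Printing Implicit Defensive.
Import Order.TTheory GRing.Theory Num.Theory.
Local Open Scope ring_scope.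

(* qnat k = q_{-(2k+1)} in Z[w] *)
Fixpoint qnat (k : nat) : {poly int} :=
  match k with
  | 0%N => 'X^3 - 'X^2 + 2%:P * 'X - 7%:P
  | 1%N => 'X^5 - 2%:P * 'X^4 - 2%:P * 'X^3 + 5%:P * 'X^2 + 3%:P * 'X - 9%:P
  | 2%N => 'X^7 - 2%:P * 'X^6 - 4%:P * 'X^5 + 8%:P * 'X^4 + 4%:P * 'X^3
           - 7%:P * 'X^2 + 2%:P * 'X - 7%:P
  | S ((S ((S k0) as k1)) as k2) =>
      ('X^2 - 1) * (qnat k2 - qnat k1) + qnat k0
  end.

(* q n for odd n <= -1: n = -(2k+1), k = (|n| - 1)/2 *)
Definition q (n : int) : {poly int} := qnat ((`|n|%N).-1./2).

(* Main.v *)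
Require Import Defs.
From HB Require Import structures.
From mathcomp Require Import all_boot all_order all_algebra.
Import Order.TTheory GRing.Theory Num.Theory.
Local Open Scope ring_scope.

Lemma qnatS k : qnat k.+3 = ('X^2 - 1) * (qnat k.+2 - qnat k.+1) + qnat k.
Proof. by []. Qed.

Lemma coefX2m1 (D : {poly int}) i :
  (('X^2 - 1) * D)`_i = (if (i < 2)%N then 0 else D`_(i - 2)) - D`_i.
Proof. by rewrite mulrBl mul1r coefB coefXnM. Qed.

Lemma c0q k : (qnat k)`_0 = if odd k then -9 else -7.
Proof.
suff: forall k, [/\ (qnat k)`_0 = if odd k then -9 else -7,
   (qnat k.+1)`_0 = if odd k.+1 then -9 else -7 &
   (qnat k.+2)`_0 = if odd k.+2 then -9 else -7] by case/(_ k).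
elim=> [|j [H0 H1 H2]].
  by split; rewrite /= !coefE.
split=> //.
rewrite qnatS coefD coefX2m1 /= coefB H0 H1 H2 /=.
by case: (odd j) => /=; rewrite sub0r opprB ?addrA //.
Qed.

Lemma modlt (m : nat) {d : nat} : (0 < d)%N -> (m %% d < d)%N.
Proof. by rewrite ltn_mod. Qed.


Lemma c2q k : ((qnat k)`_2)%:~R = (if (k %% 6 < 3)%N then 2 else 1 : 'F_3).
Proof.
suff: forall k, [/\ ((qnat k)`_2)%:~R = (if (k %% 6 < 3)%N then 2 else 1 : 'F_3),
   ((qnat k.+1)`_2)%:~R = (if (k.+1 %% 6 < 3)%N then 2 else 1 : 'F_3) &
   ((qnat k.+2)`_2)%:~R = (if (k.+2 %% 6 < 3)%N then 2 else 1 : 'F_3)] by case/(_ k).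
have c2X : forall D : {poly int}, (('X^2 - 1) * D)`_2 = D`_0 - D`_2.
  by move=> D; rewrite coefX2m1.
elim=> [|j [H0 H1 H2]].
  split; rewrite /= !coefE /=; apply/eqP; vm_compute; reflexivity.
split=> //.
rewrite qnatS coefD c2X !coefB !(intrD, intrN) H0 H1 H2 !c0q /=.
rewrite -(addn3 j) -(addn2 j) -(addn1 j) -(modnDml j 1) -(modnDml j 2) -(modnDml j 3).
rewrite -(odd_mod j (d:=6)) //.
case: (j %% 6)%N (modlt j (isT : (0 < 6)%N)) => [|[|[|[|[|[|r]]]]]] //= _;
  apply/eqP; vm_compute; reflexivity.
Qed.

Definition mulX5 (a b : nat) (v : nat * nat) : nat * nat :=
  (((4 * b * v.2) %% 5)%N, ((v.1 + 4 * a * v.2) %% 5)%N).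
Definition add5 (v w : nat * nat) : nat * nat :=
  (((v.1 + w.1) %% 5)%N, ((v.2 + w.2) %% 5)%N).
Definition neg5 (v : nat * nat) : nat * nat := (((4 * v.1) %% 5)%N, ((4 * v.2) %% 5)%N).
Definition hr a b (s : seq nat) : nat * nat :=
  foldr (fun c v => add5 ((c %% 5)%N, 0%N) (mulX5 a b v)) (0%N, 0%N) s.
Definition step5 a b (t : (nat * nat) * (nat * nat) * (nat * nat)) :=
  let: (u0, u1, u2) := t in
  let d := add5 u2 (neg5 u1) in
  (u1, u2, add5 (add5 (mulX5 a b (mulX5 a b d)) (neg5 d)) u0).
Definition s0 := [:: 3; 2; 4; 1]%N.
Definition s1 := [:: 1; 3; 0; 3; 3; 1]%N.
Definition s2 := [:: 3; 2; 3; 4; 3; 1; 3; 1]%N.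
Definition init5 a b := (hr a b s0, hr a b s1, hr a b s2).
Definition R5 a b k := (iter k (step5 a b) (init5 a b)).1.1.

Definition nz5 (v : nat * nat) := ((v.1 %% 5 != 0) || (v.2 %% 5 != 0))%N.
Definition good5 :=
  all (fun a => all (fun b => (b == 3%N) ||
     ((iter 780 (step5 a b) (init5 a b) == init5 a b) &&
      all (fun i => nz5 (R5 a b (6 * i + 1))) (iota 0 130))) (iota 0 5)) (iota 0 5).

Lemma good5_ok : good5.
Proof. vm_compute. reflexivity. Qed.

Lemma idX (R : comPzRingType) (x c0 c1 A B : R) :
  x * (c0 + c1 * x) - (- (B * c1) + (c0 - A * c1) * x) = c1 * (x ^+ 2 + A * x + B).
Proof.
rewrite !mulrDr mulrBl opprD opprK opprB expr2 (mulrC x c0) (mulrC c1 B) (mulrA c1 A x).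
rewrite (mulrCA x c1 x) (mulrC A c1) -!addrA [LHS]addrC -!addrA; congr (_ + _).
by rewrite addNr addr0 addrC.

Qed.

Definition toP (v : nat * nat) : {poly 'F_5} := (v.1%:R)%:P + (v.2%:R)%:P * 'X.
Definition hP (s : seq nat) : {poly 'F_5} := foldr (fun c p => (c%:R)%:P + 'X * p) 0 s.

Section Cong.
Variables a b : nat.
Definition F5 : {poly 'F_5} := 'X^2 + (a%:R)%:P * 'X + (b%:R)%:P.
Definition cong (P Q : {poly 'F_5}) := exists h, P - Q = F5 * h.

Lemma congD {P1 Q1 P2 Q2} : cong P1 Q1 -> cong P2 Q2 -> cong (P1 + P2) (Q1 + Q2).
Proof. by case=> h1 e1 [h2 e2]; exists (h1 + h2); rewrite mulrDr -e1 -e2 opprD addrACA. Qed.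
Lemma congN {P Q} : cong P Q -> cong (- P) (- Q).
Proof. by case=> h e; exists (- h); rewrite mulrN -e opprD. Qed.
Lemma congM R {P Q} : cong P Q -> cong (R * P) (R * Q).
Proof. by case=> h e; exists (R * h); rewrite -mulrBr e mulrCA. Qed.
Lemma congT {P Q S} : cong P Q -> cong Q S -> cong P S.
Proof. by case=> h1 e1 [h2 e2]; exists (h1 + h2); rewrite mulrDr -e1 -e2 addrA subrK. Qed.
Lemma congR P : cong P P.
Proof. by exists 0; rewrite subrr mulr0. Qed.

Lemma pr5 : prime 5. Proof. by []. Qed.
Lemma modR n : ((n %% 5)%N%:R : 'F_5) = n%:R.
Proof. exact: Fp_nat_mod pr5 n. Qed.
Lemma four5 : (4%:R : 'F_5) = -1.
Proof. apply/eqP; vm_compute; reflexivity. Qed.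

Lemma toP_add v w : toP (add5 v w) = toP v + toP w.
Proof. by rewrite /toP /= !modR !natrD !polyCD mulrDl addrACA. Qed.
Lemma toP_neg v : toP (neg5 v) = - toP v.
Proof. by rewrite /toP /= !modR !natrM four5 !mulN1r !polyCN mulNr opprD. Qed.
Lemma toP_mulX v : cong ('X * toP v) (toP (mulX5 a b v)).
Proof.
exists ((v.2%:R)%:P).
rewrite /toP /F5 /= !modR !natrD !natrM four5 !mulN1r !mulNr !polyCD !polyCN !polyCM.
by rewrite idX mulrC.
Qed.

Lemma cong_hr s : cong (hP s) (toP (hr a b s)).
Proof.
elim: s => [|c s IH] /=.
  by rewrite /toP /=; exists 0; rewrite mulr0 !polyC0 mul0r !addr0 subrr.
rewrite toP_add; apply: congD.
  by rewrite /toP /= modR polyC0 mul0r addr0; apply: congR.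
apply: congT (congM 'X IH) _; exact: toP_mulX.
Qed.

Lemma cong_step P0 P1 P2 u0 u1 u2 :
  cong P0 (toP u0) -> cong P1 (toP u1) -> cong P2 (toP u2) ->
  cong (('X^2 - 1) * (P2 - P1) + P0) (toP (step5 a b (u0, u1, u2)).2).
Proof.
move=> H0 H1 H2 /=.
rewrite !toP_add toP_neg; apply: congD => //.
have HD : cong (P2 - P1) (toP (add5 u2 (neg5 u1))).
  by rewrite toP_add toP_neg; apply: congD => //; apply: congN.
have -> : ('X^2 - 1) * (P2 - P1) = 'X * ('X * (P2 - P1)) + - (P2 - P1).
  by rewrite mulrBl mul1r expr2 mulrA.
apply: congD; last exact: congN.
apply: congT (congM 'X (congT (congM 'X HD) (toP_mulX _))) _.
exact: toP_mulX.
Qed.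
End Cong.

Definition phi5 (P : {poly int}) : {poly 'F_5} := map_poly (intr : int -> 'F_5) P.

Lemma phi5_rec k : phi5 (qnat k.+3) =
  ('X^2 - 1) * (phi5 (qnat k.+2) - phi5 (qnat k.+1)) + phi5 (qnat k).
Proof.
by rewrite qnatS /phi5 rmorphD rmorphM rmorphB /= rmorphB rmorphXn /= map_polyX rmorph1.
Qed.

Lemma base_eq (P : {poly int}) s : (forall i, (P`_i)%:~R = (hP s)`_i) -> phi5 P = hP s.
Proof. by move=> H; apply/polyP => i; rewrite /phi5 coef_map /= H. Qed.

Lemma phi5_0 : phi5 (qnat 0) = hP s0.
Proof.
apply: base_eq => i; rewrite /= !coefE.
by case: i => [|[|[|[|[|i]]]]] /=; apply/eqP; vm_compute; reflexivity.
Qed.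
Lemma phi5_1 : phi5 (qnat 1) = hP s1.
Proof.
apply: base_eq => i; rewrite /= !coefE.
by case: i => [|[|[|[|[|[|[|i]]]]]]] /=; apply/eqP; vm_compute; reflexivity.
Qed.
Lemma phi5_2 : phi5 (qnat 2) = hP s2.
Proof.
apply: base_eq => i; rewrite /= !coefE.
by case: i => [|[|[|[|[|[|[|[|[|i]]]]]]]]] /=; apply/eqP; vm_compute; reflexivity.
Qed.

Lemma cong_q a b k : cong a b (phi5 (qnat k)) (toP (R5 a b k)).
Proof.
suff: forall k, let t := iter k (step5 a b) (init5 a b) in
  [/\ cong a b (phi5 (qnat k)) (toP t.1.1), cong a b (phi5 (qnat k.+1)) (toP t.1.2)
    & cong a b (phi5 (qnat k.+2)) (toP t.2)] by case/(_ k).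
elim=> [|j IH] /=.
  by rewrite phi5_0 phi5_1 phi5_2; split; apply: cong_hr.
move: IH; case: (iter j (step5 a b) (init5 a b)) => [[u0 u1] u2] /= [H0 H1 H2].
split=> //.
rewrite phi5_rec; exact: cong_step.
Qed.

Lemma iter_period {T : Type} {f : T -> T} {x m} : iter m f x = x ->
  forall t r, iter (m * t + r) f x = iter r f x.
Proof.
move=> Hm t r; rewrite addnC iterD; congr (iter r f _).
elim: t => [|t IH]; first by rewrite muln0.
by rewrite mulnS iterD IH Hm.
Qed.

Lemma R5_nz a b k : (a < 5)%N -> (b < 5)%N -> b != 3%N -> (k %% 6 = 1)%N ->
  nz5 (R5 a b k).
Proof.
move=> Ha Hb Hb3 Hk.
have := good5_ok; rewrite /good5 => /allP /(_ a).
rewrite mem_iota leq0n add0n => /(_ Ha).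
move=> /allP /(_ b); rewrite mem_iota leq0n add0n => /(_ Hb).
rewrite (negbTE Hb3) orFb => /andP [Hper /allP Hall].
have HR : forall t r, R5 a b (780 * t + r) = R5 a b r.
  by move=> t r; rewrite /R5 (iter_period (eqP Hper)).
have Hr : (k %% 780 = 6 * ((k %% 780) %/ 6) + 1)%N.
  rewrite {1}(divn_eq (k %% 780) 6) mulnC; congr (_ + _)%N.
  by rewrite (modn_dvdm k (isT : (6 %| 780)%N)) Hk.
have E : R5 a b k = R5 a b (6 * ((k %% 780) %/ 6) + 1)%N.
  by rewrite -Hr {1}(divn_eq k 780) (mulnC (k %/ 780)%N) HR.
rewrite E; apply: (Hall ((k %% 780) %/ 6)%N); rewrite mem_iota leq0n add0n.
rewrite andTb ltn_divLR; last by [].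
exact: (modlt k (isT : (0 < 780)%N)).
Qed.

Lemma k_mod6 (N : nat) : ~~ (2 %| N)%N -> (3 %| N)%N -> (4 %| N + 1)%N ->
  ((N.-1./2) %% 6 = 1)%N.
Proof.
move=> H2 H3 H4.
have H12 : (N %% 12 = 3)%N.
  move: H2 H3 H4; rewrite /dvdn -(modn_dvdm N (isT : (2 %| 12)%N)) -(modn_dvdm N (isT : (3 %| 12)%N)).
  rewrite -(modn_dvdm (N + 1) (isT : (4 %| 12)%N)) -modnDml.
  by case: (N %% 12)%N (modlt N (isT : (0 < 12)%N)) => [|[|[|[|[|[|[|[|[|[|[|[|r]]]]]]]]]]]].
rewrite (divn_eq N 12) H12.
have -> : ((N %/ 12 * 12 + 3).-1 = (6 * (N %/ 12) + 1).*2)%N.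
  by rewrite addn3 /= -muln2 mulnDl mul1n (mulnC 6) -mulnA addn2.
by rewrite doubleK -modnDml mulnC modnMl.
Qed.

Lemma F5_0 (m : nat) : (m%:R : 'F_5) = 0 -> (m %% 5 = 0)%N.
Proof.
rewrite -modR; case: (m %% 5)%N (modlt m (isT : (0 < 5)%N)) => [|[|[|[|[|r]]]]] // _;
  move/eqP; vm_compute => //.
Qed.

Lemma F3_3 (x : int) : (3 %| x)%Z -> (x%:~R : 'F_3) = 0.
Proof.
move=> /dvdzP [m ->]; rewrite intrM.
have -> : ((3 : int)%:~R : 'F_3) = 0 by apply/eqP; vm_compute.
by rewrite mulr0.
Qed.

Theorem lemma5p4 (n : int) :
  n <= -1 -> ~~ (2 %| n)%Z -> (3 %| n)%Z -> (n = 1 %[mod 4])%Z ->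
  ~ (exists f : {poly int},
       [/\ f \is monic, size f = 3%N,
           (forall i : nat, (3 %| (f - 'X^2)`_i)%Z)
         & exists g : {poly int}, q n = f * g]).
Proof.
move=> Hn Hodd H3 H4 [f [Hmon Hsz Hdiv [g Hq]]].
set N := `|n|%N.
have nE : n = - (N%:Z).
  by rewrite /N abszE ler0_norm ?opprK // (le_trans Hn).
have HN2 : ~~ (2 %| N)%N by move: Hodd; rewrite dvdzE.
have HN3 : (3 %| N)%N by move: H3; rewrite dvdzE.
have HN4 : (4 %| N + 1)%N.
  move/eqP: H4; rewrite eqz_mod_dvd dvdzE nE -opprD abszN.
  by rewrite -[1]/(1%N%:Z) -PoszD absz_nat.
have Hk := @k_mod6 N HN2 HN3 HN4.
move: Hq; rewrite /q -/N; set k := (N.-1./2)%N => Hq.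
have Hoddk : odd k by rewrite -(odd_mod k (d:=6)) // Hk.
set al := f`_1; set be := f`_0.
have fE : f = 'X^2 + al%:P * 'X + be%:P.
  apply/polyP => i; rewrite !coefE.
  case: i => [|[|[|i]]] /=; rewrite ?mul0r ?mulr0 ?mulr1 ?add0r ?addr0 //.
    by move/monicP: Hmon; rewrite lead_coefE Hsz.
  by rewrite nth_default // Hsz.
have H3al : (3 %| al)%Z by move: (Hdiv 1%N); rewrite coefB coefXn subr0.
have H3be : (3 %| be)%Z by move: (Hdiv 0%N); rewrite coefB coefXn subr0.
have Hfg2 : (f * g)`_2 = g`_0 + al * g`_1 + be * g`_2.
  by rewrite fE !mulrDl coefD coefD coefXnM -mulrA coefCM coefXM coefCM.
have Hbe9 : be * g`_0 = -9 by rewrite -coef0M -Hq c0q Hoddk.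
have Hg0 : ((g`_0)%:~R : 'F_3) = 2.
  have := c2q k; rewrite Hk /= Hq Hfg2 !intrD !intrM (@F3_3 _ H3al) (@F3_3 _ H3be).
  by rewrite !mul0r !addr0.
(* be is a divisor of 9, not 3 *)
have Hbe5 : val (be%:~R : 'F_5) != 3%N.
  have Hab : (absz be * absz (g`_0)%R = 9)%N by rewrite -abszM Hbe9.
  have : (`|be| \in divisors 9)%N.
    by rewrite -dvdn_divisors // -Hab dvdn_mulr.
  have Hvals : divisors 9 = [:: 1; 3; 9]%N by vm_compute.
  rewrite Hvals.
  case Ebe: be => [m|m]; rewrite /= !inE.
    case/or3P => /eqP Em; subst m; try by vm_compute.
    move: Hbe9; rewrite Ebe => Hg.
    have Hg3 : g`_0 = -3.
      apply: (mulfI (isT : (3 : int) != 0)); rewrite Hg; by [].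
    by move: Hg0; rewrite Hg3 => /eqP; vm_compute.
  by case/or3P => /eqP [] Em; subst m; vm_compute.
set a := val (al%:~R : 'F_5); set b := val (be%:~R : 'F_5).
have Fphi : phi5 f = F5 a b.
  rewrite fE /phi5 /F5 !rmorphD !rmorphM /= !map_polyX !map_polyC /= -expr2.
  by rewrite /a /b !natr_Zp.
have HszF : size (F5 a b) = 3%N.
  rewrite -Fphi /phi5 size_map_poly_id0 // -/(lead_coef f).
  by move/monicP: Hmon => ->; rewrite rmorph1 oner_neq0.
have [h Eh] := cong_q a b k.
have Ha : (a < 5)%N by exact: ltn_ord.
have Hb : (b < 5)%N by exact: ltn_ord.
have Hnz := @R5_nz a b k Ha Hb Hbe5 Hk.
move: Eh; rewrite Hq /phi5 rmorphM /= -/(phi5 f) -/(phi5 g) Fphi.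
set v := R5 a b k => Eh.
have Ev : toP v = F5 a b * (phi5 g - h) by rewrite mulrBr -Eh opprB addrC subrK.
have Hsz2 : (size (toP v) <= 2)%N.
  rewrite /toP addrC size_MXaddC.
  case: ifP => // _; rewrite ltnS size_polyC; by case: (_ != 0).
have H0 : phi5 g - h = 0.
  case: (eqVneq (phi5 g - h) 0) => // Hne.
  have HF0 : F5 a b != 0 by apply/eqP => E0; move: HszF; rewrite E0 size_poly0.
  move: Hsz2; rewrite Ev size_mul // => Hle.
  have Hle' : ((size (F5 a b) + size (phi5 g - h)%R).-1 <= 2)%N := Hle.
  by move: Hle'; rewrite HszF add3n /= !ltnS leqn0 size_poly_eq0 (negbTE Hne).
move: Ev; rewrite H0 mulr0 => Ev.
have E1 : (v.1%:R : 'F_5) = 0.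
  by move: (congr1 (fun p : {poly 'F_5} => p`_0) Ev); rewrite /toP coefD coefMX !coefC /= ?coef0 ?addr0.
have E2 : (v.2%:R : 'F_5) = 0.
  by move: (congr1 (fun p : {poly 'F_5} => p`_1) Ev); rewrite /toP coefD coefMX !coefC /= ?coef0 ?add0r.
by move: Hnz; rewrite /nz5 (F5_0 _ E1) (F5_0 _ E2).
Qed.
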